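(* Let $p>5$ be a prime and $A\subseteq\mathbb{F}_p$ satisfy $A-A\doteq\mathcal{R}_p$. Then the multiplier subgroup $M_A$ has odd order; equivalently, $-1\notin M_A$.
   Context: $\mathcal{R}_p$ is the set of nonzero quadratic residues modulo $p$. $A-A\doteq S$ means: every element of $S$ has exactly one representation as $a'-a''$ with $a',a''\in A$, and every difference $a'-a''$ with $a'\ne a''$ in $A$ lies in $S$. An element $\mu\in\mathbb{F}_p^\times$ is a multiplier of $A$ if $\mu A=A+g$ for some $g\in\mathbb{F}_p$, where $\mu A=\{\mu a\colon a\in A\}$; the multipliers form a subgroup $M_A\le\mathbb{F}_p^\times$. *)

(* Defs.v *)
From HB Require Import structures.
From mathcomp Require Import all_boot all_order all_algebra.
Set Implicit Arguments. Unset Strict Implicit. Unset Printing Implicit Defensive.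
Import GRing.Theory.
Local Open Scope ring_scope.

Definition qres (p : nat) : {set 'F_p} :=
  [set x : 'F_p | (x != 0) && [exists y : 'F_p, y ^+ 2 == x]].

(* A - A =. S : every s in S has exactly one representation a' - a''
   with a', a'' in A, and every difference of distinct elements of A lies in S. *)
Definition perfect_diff (p : nat) (A S : {set 'F_p}) : Prop :=
  (forall s, s \in S ->
     #|[set u : 'F_p * 'F_p | (u.1 \in A) && (u.2 \in A) && (u.1 - u.2 == s)]| = 1%N)
  /\ (forall a1 a2, a1 \in A -> a2 \in A -> a1 != a2 -> a1 - a2 \in S).

Definition multipliers (p : nat) (A : {set 'F_p}) : {set 'F_p} :=
  [set mu : 'F_p | (mu != 0) &&
     [exists g : 'F_p, [set mu * a | a in A] == [set a + g | a in A]]].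

(* Main.v *)
Require Import Defs.
From HB Require Import structures.
From mathcomp Require Import all_boot all_order all_algebra.
From mathcomp Require Import ring.
Import GRing.Theory.
Local Open Scope ring_scope.

Lemma ndiv (p n : nat) : prime p -> (5 < p)%N -> (0 < n)%N -> (n <= 9)%N -> n != 7 -> ~~ (p %| n)%N.
Proof.
move=> pp p5 n0 n9 n7; apply/negP => d.
have le := dvdn_leq n0 d.
have p9 : (p <= 9)%N by apply: leq_trans le n9.
have : p \in [:: 7]%N.
  by clear -p5 p9 pp; case: p pp p5 p9 => [|[|[|[|[|[|[|[|[|[|p]]]]]]]]]].
rewrite !inE => /eqP e; subst p.
by clear le; case: n n0 n9 n7 d => [|[|[|[|[|[|[|[|[|[|n]]]]]]]]]].
Qed.

Section Aux.
Variable p : nat.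
Hypothesis pp : prime p.

Lemma natFp_neq0 (n : nat) : (0 < n)%N -> (n < p)%N -> (n%:R : 'F_p) != 0.
Proof.
move=> n0 np; rewrite -(dvdn_pcharf (pchar_Fp pp)).
by rewrite gtnNdvd.
Qed.

Lemma natFp_neq (m n : nat) : (m < n)%N -> ~~ (p %| n - m)%N -> (m%:R : 'F_p) != n%:R.
Proof.
move=> mn np; rewrite eq_sym -subr_eq0 -natrB; last exact: ltnW.
by rewrite -(dvdn_pcharf (pchar_Fp pp)).
Qed.

Lemma rep_pair (A : {set 'F_p}) s :
  #|[set u : 'F_p * 'F_p | (u.1 \in A) && (u.2 \in A) && (u.1 - u.2 == s)]| = 1%N ->
  exists a b, [/\ a \in A, b \in A, a - b = s &
   forall a' b', a' \in A -> b' \in A -> a' - b' = s -> a' = a /\ b' = b].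
Proof.
move/eqP/cards1P=> [[a b] E].
have : (a, b) \in [set (a, b)] by rewrite in_set1.
rewrite -E inE /= => /andP[/andP[aA bA] /eqP ab].
exists a, b; split=> // a' b' a'A b'A ab'.
have : (a', b') \in [set (a, b)] by rewrite -E inE /= a'A b'A ab' eqxx.
by rewrite in_set1 => /eqP[-> ->].
Qed.

Lemma sym_sum (A : {set 'F_p}) (g : 'F_p) :
  perfect_diff A (qres p) -> (forall y, y \in A -> - y - g \in A) ->
  forall x y, x \in A -> y \in A -> x != y -> x + y = - g.
Proof.
move=> [H1 H2] Hs x y xA yA xy.
have := H2 x y xA yA xy => /H1 /rep_pair [a [b [aA bA ab U]]].
have e : - y - g - (- x - g) = x - y by ring.
have [e3 _] := U x y xA yA (erefl _).
have [e1 _] := U (- y - g) (- x - g) (Hs _ yA) (Hs _ xA) e.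
by rewrite e3 -e1; ring.
Qed.

End Aux.

Lemma invol_even (T : finType) (f : T -> T) (n : nat) (S : {set T}) :
  #|S| = n -> (forall x, x \in S -> [/\ f x \in S, f (f x) = x & f x != x]) ->
  ~~ odd #|S|.
Proof.
elim: n {-2}n (leqnn n) S => [|N IH] n le S cS H.
  by move: le; rewrite leqn0 => /eqP n0; rewrite cS n0.
case: (set_0Vmem S) => [->|[x xS]]; first by rewrite cards0.
have [fxS ffx fxx] := H x xS.
set S' := S :\ x :\ f x.
have cS2 : #|S| = (#|S'|.+2)%N.
  rewrite (cardsD1 x S) xS (cardsD1 (f x) (S :\ x)) !inE fxx fxS.
  by rewrite add1n add1n.
have le' : (#|S'| <= N)%N.
  by move: le; rewrite -cS cS2 ltnS => /ltnW.
rewrite cS2 /= negbK.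
apply: (IH _ le' S' (erefl _)) => y; rewrite !inE => /andP[yfx /andP[yx yS]].
have [fyS ffy fyy] := H y yS.
split=> //; rewrite fyS andbT; apply/andP; split.
  by apply: contra yx => /eqP e; rewrite -ffy e ffx.
by apply: contra yfx => /eqP e; rewrite -ffy e.
Qed.

Theorem lemma1 (p : nat) (A : {set 'F_p}) :
  prime p -> (5 < p)%N -> perfect_diff A (qres p) ->
  odd #|multipliers A| /\ (-1 : 'F_p) \notin multipliers A.
Proof.
move=> pp p5 PD.
have notm1 : (-1 : 'F_p) \notin multipliers A.
  apply/negP; rewrite inE => /andP[_ /existsP[g /eqP E]].
  have Hs : forall y, y \in A -> - y - g \in A.
    move=> y yA.
    have : -1 * y \in [set a + g | a in A] by rewrite -E; apply: imset_f.
    by case/imsetP=> a aA e; rewrite -mulN1r e addrK.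
  have SS := @sym_sum p A g PD Hs.
  have qr : forall n, (0 < n)%N -> (n <= 3)%N -> (n ^ 2)%:R \in qres p.
    move=> n n0 np; rewrite /qres inE; apply/andP; split.
      rewrite -(dvdn_pcharf (pchar_Fp pp)) ndiv //; by case: n n0 np => [|[|[|[|n]]]].
    by apply/existsP; exists n%:R; rewrite natrX.
  case: PD => [H1 _].
  have [a1 [b1 [a1A b1A d1 _]]] := @rep_pair p A _ (H1 _ (qr 1%N erefl erefl)).
  have [a4 [b4 [a4A b4A d4 _]]] := @rep_pair p A _ (H1 _ (qr 2%N erefl erefl)).
  have [a9 [b9 [a9A b9A d9 _]]] := @rep_pair p A _ (H1 _ (qr 3%N erefl erefl)).
  have ne : forall m n : nat, (m < n)%N -> (n - m <= 9)%N -> (n - m != 7)%N -> (m%:R : 'F_p) != n%:R.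
    by move=> m n mn nm n7; apply: (@natFp_neq p pp _ _ mn) (@ndiv p _ pp p5 _ nm n7); rewrite subn_gt0.
  have s0 : forall a b (s : 'F_p), a - b = s -> s != 0 -> a != b.
    by move=> a b s e sn; apply: contra sn => /eqP ab; rewrite -e ab subrr.
  have nz : forall n, (0 < n)%N -> (n <= 9)%N -> (n != 7)%N -> ((n%:R : 'F_p) != 0).
    move=> n n0 n9 n7; rewrite -[X in _ != X](mulr0n 1) eq_sym; apply: ne; rewrite ?subn0 //.
  have s1 := SS _ _ a1A b1A (s0 _ _ _ d1 (nz 1%N erefl erefl erefl)).
  have s4 := SS _ _ a4A b4A (s0 _ _ _ d4 (nz 4%N erefl erefl erefl)).
  have s9 := SS _ _ a9A b9A (s0 _ _ _ d9 (nz 9%N erefl erefl erefl)).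
  have dif : forall a b a' b' (s s' : 'F_p), a + b = -g -> a' + b' = -g ->
      a - b = s -> a' - b' = s' -> s != s' -> a != a'.
    move=> a b a' b' s s' e e' ds ds' ss; apply: contra ss => /eqP aa.
    have bb : b = b' by apply: (addrI a); rewrite e aa e'.
    by rewrite -ds -ds' aa bb.
  have n14 := dif _ _ _ _ _ _ s1 s4 d1 d4 (ne 1%N 4%N erefl erefl erefl).
  have n19 := dif _ _ _ _ _ _ s1 s9 d1 d9 (ne 1%N 9%N erefl erefl erefl).
  have n49 := dif _ _ _ _ _ _ s4 s9 d4 d9 (ne 4%N 9%N erefl erefl erefl).
  have e4 : a4 = b1 by apply: (addrI a1); rewrite s1 SS.
  have e9 : a9 = b1 by apply: (addrI a1); rewrite s1 SS.
  by move: n49; rewrite e4 e9 eqxx.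
split=> //.
set S := multipliers A.
have S1 : (1 : 'F_p) \in S.
  rewrite inE oner_neq0 /=; apply/existsP; exists 0.
  by apply/eqP; apply: eq_imset => a; rewrite mul1r addr0.
have Sinv : forall x, x \in S -> x^-1 \in S.
  move=> x; rewrite !inE => /andP[x0 /existsP[g /eqP E]].
  rewrite invr_eq0 x0 /=; apply/existsP; exists (- (x^-1 * g)).
  apply/eqP/setP => y; apply/imsetP/imsetP => [[a aA ->]|[b bA ->]].
  - have : a + g \in [set x * a | a in A] by rewrite E; apply: imset_f.
    case/imsetP => b bA e; exists b => //.
    by rewrite -(mulKf x0 b) -e mulrDr addrK.
  - have : x * b \in [set a + g | a in A] by rewrite -E; apply: imset_f.
    case/imsetP => a aA e; exists a => //.
    by rewrite -(mulKf x0 b) e mulrDr addrK.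
rewrite (cardsD1 1 S) S1 /= ?add0n.

apply: (@invol_even _ (fun x => x^-1) _ (S :\ 1) erefl) => x.
rewrite in_setD1 => /andP[x1 xS]; move: (xS); rewrite /S inE => /andP[x0 _].
split.
- rewrite in_setD1 Sinv // andbT; apply: contra x1 => /eqP e.
  by rewrite -[x]invrK e invr1.
- by rewrite invrK.
- apply/eqP => e.
  have : (x - 1) * (x + 1) = 0.
    rewrite mulrDr mulr1 mulrBl mul1r -{1}e mulVf // addrA subrK subrr //.
  move/eqP; rewrite mulf_eq0 subr_eq0 (negbTE x1) /= addr_eq0 => /eqP xm.
  by move: notm1; rewrite -xm xS.
Qed.
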